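(* Let $S$ be semibounded in $\mathfrak H$ with lower bound $\gamma\in\mathbb R$ and $c\le\gamma$. Let $Q_c$ (into $\mathfrak K_c$) and $Q_c'$ (into $\mathfrak K_c'$) be representing maps for $\mathfrak t(S)-c$, and let $V:\mathfrak K_c\to\mathfrak K_c'$ be a partial isometry with initial space $\overline{\mathrm{ran}}\,Q_c$ and final space $\overline{\mathrm{ran}}\,Q_c'$ such that $Q_c'=VQ_c$. Let $J_c$ and $J_c'$ be the companion relations of $Q_c$ and $Q_c'$. Then $J_c'\,(V\restriction\mathrm{ran}\,Q_c)=J_c$; moreover $S\subset c+J_c'Q_c'=c+J_cQ_c$, where the inclusion is an equality if and only if $\mathrm{ran}\,(S-c)\cap\mathrm{mul}\,S^*=\mathrm{mul}\,S$; and $((J_c')^* )_{\rm reg}=V\,(J_c^* )_{\rm reg}$.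
   Context: Linear relations are linear subspaces $T\subset\mathfrak H\times\mathfrak K$; $\mathrm{dom},\mathrm{ran},\mathrm{mul}\,T=\{g:\{0,g\}\in T\}$; $T^*=\{\{h,k\}:(k,f)=(h,g)\ \forall\{f,g\}\in T\}$; $RT=\{\{f,h\}:\exists g,\{f,g\}\in T,\{g,h\}\in R\}$; $c+T=\{\{f,g+cf\}:\{f,g\}\in T\}$, $S-c=\{\{f,g-cf\}:\{f,g\}\in S\}$. For a closed relation $T$, $T_{\rm reg}=\{\{f,(I-\pi)g\}:\{f,g\}\in T\}$ with $\pi$ the orthogonal projection onto $\mathrm{mul}\,T$. $S$ is semibounded with lower bound $\gamma$ if $\gamma$ is the supremum of all $c$ with $(\varphi',\varphi)\ge c\|\varphi\|^2$ for all $\{\varphi,\varphi'\}\in S$; $\mathfrak t(S)[\varphi,\psi]=(\varphi',\psi)$ on $\mathrm{dom}\,S$. A representing map for $\mathfrak t(S)-c$ is a linear operator $Q_c$ into a Hilbert space with $\mathrm{dom}\,Q_c=\mathrm{dom}\,S$ and $\mathfrak t(S)[\varphi,\psi]=c(\varphi,\psi)+(Q_c\varphi,Q_c\psi)$; its companion relation is $J_c=\{\{Q_c\varphi,\varphi'-c\varphi\}:\{\varphi,\varphi'\}\in S\}$. *)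

(* Defs.v *)
From HB Require Import structures.
From mathcomp Require Import all_boot all_order all_algebra.
From mathcomp Require Import boolp classical_sets reals.
From mathcomp Require Import complex.
Set Implicit Arguments. Unset Strict Implicit. Unset Printing Implicit Defensive.
Import Order.TTheory GRing.Theory Num.Theory.
Local Open Scope ring_scope.
Local Open Scope classical_set_scope.
Local Open Scope complex_scope.

(* The inner product is linear in its first argument and conjugate linear in
   the second; [hnorm x = sqrt (complex.Re (x,x))]; completeness is sequential
   completeness for the induced norm. *)
Record hilbert (R : realType) := Hilbert {
  hcarrier :> lmodType R[i];
  hinner : hcarrier -> hcarrier -> R[i];
  hinnerDl : forall (a : R[i]) (x y z : hcarrier),
      hinner (a *: x + y) z = a * hinner x z + hinner y z;
  hinnerC : forall x y : hcarrier, hinner y x = (hinner x y)^*;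
  hinner_ge0 : forall x : hcarrier, 0 <= hinner x x;
  hinner_eq0 : forall x : hcarrier, hinner x x = 0 -> x = 0;
  hcomplete : forall u : nat -> hcarrier,
      (forall e : R, 0 < e -> exists N : nat, forall m n : nat, (N <= m)%N -> (N <= n)%N ->
          Num.sqrt (complex.Re (hinner (u m - u n) (u m - u n))) < e) ->
      exists l : hcarrier, forall e : R, 0 < e -> exists N : nat, forall n : nat, (N <= n)%N ->
          Num.sqrt (complex.Re (hinner (u n - l) (u n - l))) < e
}.

Arguments hinner {R} h _ _.

Section Defs.
Variable R : realType.

Definition hnorm (H : hilbert R) (x : H) : R := Num.sqrt (complex.Re (hinner H x x)).

Definition hclosure (H : hilbert R) (A : set H) : set H :=
  [set x | forall e : R, 0 < e -> exists2 a, A a & hnorm (x - a) < e].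

Definition horth (H : hilbert R) (A : set H) : set H :=
  [set x | forall a, A a -> hinner H x a = 0].

Definition is_subspace (X : lmodType R[i]) (A : set X) : Prop :=
  A 0 /\ forall (a : R[i]) x y, A x -> A y -> A (a *: x + y).

Definition linrel (H K : Type) := set (H * K).

Definition is_linrel (H K : lmodType R[i]) (T : linrel H K) : Prop :=
  T (0, 0) /\ forall (a : R[i]) f g f' g', T (f, g) -> T (f', g') ->
    T (a *: f + f', a *: g + g').

Definition rdom (H K : lmodType R[i]) (T : linrel H K) : set H :=
  [set f | exists g, T (f, g)].
Definition rran (H K : lmodType R[i]) (T : linrel H K) : set K :=
  [set g | exists f, T (f, g)].
Definition rmul (H K : lmodType R[i]) (T : linrel H K) : set K :=
  [set g | T (0, g)].

Definition radj (H K : hilbert R) (T : linrel H K) : linrel K H :=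
  [set hk | forall f g, T (f, g) -> hinner H hk.2 f = hinner K hk.1 g].

Definition rcomp (H K L : lmodType R[i]) (S : linrel K L) (T : linrel H K)
  : linrel H L := [set fh | exists g, T (fh.1, g) /\ S (g, fh.2)].

Definition raddc (H : lmodType R[i]) (c : R) (T : linrel H H) : linrel H H :=
  [set fh | exists g, T (fh.1, g) /\ fh.2 = g + c%:C *: fh.1].
Definition rsubc (H : lmodType R[i]) (S : linrel H H) (c : R) : linrel H H :=
  [set fh | exists g, S (fh.1, g) /\ fh.2 = g - c%:C *: fh.1].

Definition opgraph (H K : lmodType R[i]) (A : set H) (q : H -> K) : linrel H K :=
  [set xk | A xk.1 /\ xk.2 = q xk.1].

(* T_reg = {{f, (I - pi) g} : {f,g} in T}, pi the orthogonal projection onto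
   mul T; (I - pi) g is characterised as the h with g - h in mul T and
   h orthogonal to mul T (mul T is closed when T is closed). *)
Definition rreg (H K : hilbert R) (T : linrel H K) : linrel H K :=
  [set fh | exists g, T (fh.1, g) /\ rmul T (g - fh.2) /\ horth (rmul T) fh.2].

Definition sb_const (H : hilbert R) (S : linrel H H) (c : R) : Prop :=
  forall phi phi', S (phi, phi') -> c%:C * hinner H phi phi <= hinner H phi' phi.

Definition semibounded_lb (H : hilbert R) (S : linrel H H) (gamma : R) : Prop :=
  (forall c, sb_const S c -> c <= gamma) /\
  (forall u, (forall c, sb_const S c -> c <= u) -> gamma <= u).

(* Q (a linear operator from dom S into K) is a representing map for
   t(S) - c, where t(S)[phi, psi] = (phi', psi) on dom S *)
Definition representing_map (H K : hilbert R) (S : linrel H H) (c : R)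
    (Q : H -> K) : Prop :=
  (forall (a : R[i]) x y, rdom S x -> rdom S y -> Q (a *: x + y) = a *: Q x + Q y) /\
  (forall phi phi' psi, S (phi, phi') -> rdom S psi ->
     hinner H phi' psi = c%:C * hinner H phi psi + hinner K (Q phi) (Q psi)).

Definition rop (H K : hilbert R) (S : linrel H H) (Q : H -> K) : linrel H K :=
  opgraph (rdom S) Q.

Definition companion (H K : hilbert R) (S : linrel H H) (c : R) (Q : H -> K)
  : linrel K H :=
  [set kh | exists phi phi', S (phi, phi') /\ kh.1 = Q phi /\
                             kh.2 = phi' - c%:C *: phi].

Definition partial_isometry (K K' : hilbert R) (V : {linear K -> K'})
    (M : set K) (N : set K') : Prop :=
  (forall x, M x -> hnorm (V x) = hnorm x) /\
  (forall x, horth M x -> V x = 0) /\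
  V @` setT = N.

End Defs.

(* Main.v *)
Require Import Defs.
From HB Require Import structures.
From mathcomp Require Import all_boot all_order all_algebra.
From mathcomp Require Import boolp classical_sets reals.
From mathcomp Require Import complex.
From mathcomp Require Import ring lra.
Import Order.TTheory GRing.Theory Num.Theory.
Set Implicit Arguments. Unset Strict Implicit. Unset Printing Implicit Defensive.
Local Open Scope ring_scope.
Local Open Scope classical_set_scope.
Local Open Scope complex_scope.

Lemma cconjD (R : realType) (x y : R[i]) : conjc (x + y) = conjc x + conjc y.
Proof. by case: x; case: y => a b c d /=; rewrite opprD. Qed.
Lemma cconjN (R : realType) (x : R[i]) : conjc (- x) = - conjc x.
Proof. by case: x. Qed.
Lemma cconjM (R : realType) (x y : R[i]) : conjc (x * y) = conjc x * conjc y.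
Proof. by case: x; case: y => a b c d /=; apply/eqP; rewrite eq_complex /= !mulrN !mulNr opprK opprD !eqxx. Qed.

Lemma ip0l (R : realType) (K : hilbert R) (x : K) : hinner K 0 x = 0.
Proof.
have := hinnerDl 1 0 0 x; rewrite scale1r addr0 mul1r.
by move/(congr1 (fun t => t - hinner K 0 x)); rewrite subrr addrK.
Qed.

Lemma ipDl (R : realType) (K : hilbert R) (x y z : K) :
  hinner K (x + y) z = hinner K x z + hinner K y z.
Proof. by have := hinnerDl 1 x y z; rewrite scale1r mul1r. Qed.

Lemma ipZl (R : realType) (K : hilbert R) a (x z : K) :
  hinner K (a *: x) z = a * hinner K x z.
Proof. by have := hinnerDl a x 0 z; rewrite addr0 ip0l addr0. Qed.

Lemma ipNl (R : realType) (K : hilbert R) (x z : K) :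
  hinner K (- x) z = - hinner K x z.
Proof. by rewrite -scaleN1r ipZl mulN1r. Qed.

Lemma ipBl (R : realType) (K : hilbert R) (x y z : K) :
  hinner K (x - y) z = hinner K x z - hinner K y z.
Proof. by rewrite ipDl ipNl. Qed.

Lemma ip0r (R : realType) (K : hilbert R) (x : K) : hinner K x 0 = 0.
Proof. by rewrite hinnerC ip0l conjc0. Qed.

Lemma ipDr (R : realType) (K : hilbert R) (x y z : K) :
  hinner K z (x + y) = hinner K z x + hinner K z y.
Proof. by rewrite hinnerC ipDl cconjD -!hinnerC. Qed.

Lemma ipZr (R : realType) (K : hilbert R) a (x z : K) :
  hinner K z (a *: x) = conjc a * hinner K z x.
Proof. by rewrite hinnerC ipZl cconjM -hinnerC. Qed.

Lemma ipNr (R : realType) (K : hilbert R) (x z : K) :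
  hinner K z (- x) = - hinner K z x.
Proof. by rewrite hinnerC ipNl cconjN -hinnerC. Qed.

Lemma ipBr (R : realType) (K : hilbert R) (x y z : K) :
  hinner K z (x - y) = hinner K z x - hinner K z y.
Proof. by rewrite ipDr ipNr. Qed.

Lemma cReD (R : realType) (x y : R[i]) : complex.Re (x + y) = complex.Re x + complex.Re y.
Proof. by case: x; case: y. Qed.
Lemma cImD (R : realType) (x y : R[i]) : complex.Im (x + y) = complex.Im x + complex.Im y.
Proof. by case: x; case: y. Qed.
Lemma cReN (R : realType) (x : R[i]) : complex.Re (- x) = - complex.Re x.
Proof. by case: x. Qed.
Lemma cImN (R : realType) (x : R[i]) : complex.Im (- x) = - complex.Im x.
Proof. by case: x. Qed.
Lemma cReJ (R : realType) (x : R[i]) : complex.Re (conjc x) = complex.Re x.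
Proof. by case: x. Qed.
Lemma cReMr (R : realType) (s : R) (x : R[i]) : complex.Re (s%:C * x) = s * complex.Re x.
Proof. by case: x => a b /=; rewrite !mul0r subr0. Qed.
Lemma cReMi (R : realType) (x : R[i]) : complex.Re (conjc 'i * x) = complex.Im x.
Proof. by case: x => a b /=; rewrite mul0r mulN1r opprK add0r. Qed.
Lemma cImMr (R : realType) (s : R) (x : R[i]) : complex.Im (s%:C * x) = s * complex.Im x.
Proof. by case: x => a b /=; rewrite !mul0r addr0. Qed.
Lemma cconj_real (R : realType) (s : R) : conjc (s%:C) = s%:C.
Proof. by rewrite /= oppr0. Qed.
Lemma complex_eq0 (R : realType) (x : R[i]) : complex.Re x = 0 -> complex.Im x = 0 -> x = 0.
Proof. by case: x => a b /= -> ->. Qed.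
Lemma complex_eqRI (R : realType) (x y : R[i]) : complex.Re x = complex.Re y -> complex.Im x = complex.Im y -> x = y.
Proof. by case: x; case: y => a b c d /= -> ->. Qed.



Definition nsq (R : realType) (K : hilbert R) (x : K) := complex.Re (hinner K x x).
Arguments nsq {R K}.

Lemma ip_self (R : realType) (K : hilbert R) (x : K) : hinner K x x = (nsq x)%:C.
Proof.
have := hinner_ge0 x; rewrite /nsq; case: (hinner K x x) => a b.
by rewrite lecE /= => /andP[/eqP -> _].
Qed.

Lemma nsq_ge0 (R : realType) (K : hilbert R) (x : K) : 0 <= nsq x.
Proof.
have := hinner_ge0 x; rewrite /nsq; case: (hinner K x x) => a b.
by rewrite lecE /= => /andP[_ ->].
Qed.

Lemma nsq_eq0 (R : realType) (K : hilbert R) (x : K) : nsq x = 0 -> x = 0.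
Proof. by move=> h; apply: hinner_eq0; rewrite ip_self h. Qed.

Lemma hnorm_ge0 (R : realType) (K : hilbert R) (x : K) : 0 <= hnorm x.
Proof. exact: sqrtr_ge0. Qed.

Lemma hnorm_sq (R : realType) (K : hilbert R) (x : K) : hnorm x ^+ 2 = nsq x.
Proof. by rewrite /hnorm sqr_sqrtr // nsq_ge0. Qed.

Lemma Re_ipC (R : realType) (K : hilbert R) (x y : K) :
  complex.Re (hinner K y x) = complex.Re (hinner K x y).
Proof. by rewrite hinnerC cReJ. Qed.

Lemma nsqD (R : realType) (K : hilbert R) (x y : K) :
  nsq (x + y) = nsq x + nsq y + 2 * complex.Re (hinner K x y).
Proof.
rewrite /nsq ipDl !ipDr !cReD (Re_ipC x y); lra.
Qed.

Lemma nsqN (R : realType) (K : hilbert R) (x : K) : nsq (- x) = nsq x.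
Proof. by rewrite /nsq ipNl ipNr opprK. Qed.

Lemma nsqZr (R : realType) (K : hilbert R) (s : R) (x : K) :
  nsq (s%:C *: x) = s ^+ 2 * nsq x.
Proof. by rewrite /nsq ipZl ipZr cconj_real cReMr cReMr mulrA expr2. Qed.

Lemma nsqZi (R : realType) (K : hilbert R) (x : K) : nsq ('i *: x) = nsq x.
Proof.
rewrite /nsq ipZl ipZr mulrA ip_self.
have -> : ('i * conjc 'i : R[i]) = 1 by apply/eqP; rewrite eq_complex /=; apply/andP; split; apply/eqP; lra.
by rewrite mul1r.
Qed.

Lemma hn_Zi (R : realType) (K : hilbert R) (x : K) : hnorm ('i *: x) = hnorm x.
Proof. by rewrite /hnorm -/(nsq ('i *: x)) nsqZi. Qed.

Lemma hn_opp (R : realType) (K : hilbert R) (x : K) : hnorm (- x) = hnorm x.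
Proof. by rewrite /hnorm -/(nsq _) nsqN. Qed.

Lemma hn_sym (R : realType) (K : hilbert R) (x y : K) : hnorm (x - y) = hnorm (y - x).
Proof. by rewrite -hn_opp opprB. Qed.

Lemma hn_0 (R : realType) (K : hilbert R) : hnorm (0 : K) = 0.
Proof. by rewrite /hnorm ip0l sqrtr0. Qed.

Lemma nsq_expand (R : realType) (K : hilbert R) (s : R) (x y : K) :
  nsq (x - s%:C *: y) = nsq x - 2 * s * complex.Re (hinner K x y) + s ^+ 2 * nsq y.
Proof.
rewrite nsqD nsqN nsqZr ipNr ipZr cReN cconj_real cReMr; lra.
Qed.

Lemma CS (R : realType) (K : hilbert R) (x y : K) :
  complex.Re (hinner K x y) <= hnorm x * hnorm y.
Proof.
have [->|x0] := eqVneq x 0; first by rewrite ip0l hn_0 mul0r.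
have [->|y0] := eqVneq y 0; first by rewrite ip0r hn_0 mulr0.
have ha : 0 < hnorm x.
  rewrite lt_neqAle hnorm_ge0 andbT eq_sym; apply/negP => /eqP h.
  by move: x0; rewrite (nsq_eq0 (x := x)) ?eqxx // -hnorm_sq h expr0n.
have hb : 0 < hnorm y.
  rewrite lt_neqAle hnorm_ge0 andbT eq_sym; apply/negP => /eqP h.
  by move: y0; rewrite (nsq_eq0 (x := y)) ?eqxx // -hnorm_sq h expr0n.
have := nsq_ge0 (x - (hnorm x / hnorm y)%:C *: y).
rewrite nsq_expand -!hnorm_sq.
set u := complex.Re _; set a := hnorm x; set b := hnorm y => h.
have hb' : b != 0 by rewrite gt_eqF.
have : 0 <= 2 * a ^+ 2 - 2 * (a / b) * u by move: h; rewrite exprMn exprVn mulrA divfK ?expf_neq0 //; lra.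
move=> h2.
have : 0 <= (2 * a ^+ 2 - 2 * (a / b) * u) * (b / a / 2).
  by apply: mulr_ge0 => //; apply: divr_ge0; [apply: divr_ge0; exact: ltW|].
have -> : (2 * a ^+ 2 - 2 * (a / b) * u) * (b / a / 2) = a * b - u.
  by field; rewrite ?gt_eqF.
lra.
Qed.

Lemma CS_abs (R : realType) (K : hilbert R) (x y : K) :
  `|complex.Re (hinner K x y)| <= hnorm x * hnorm y.
Proof.
rewrite ler_norml CS andbT lerNl -cReN -ipNr.
by apply: le_trans (CS _ _) _; rewrite hn_opp.
Qed.

Lemma CS_absIm (R : realType) (K : hilbert R) (x y : K) :
  `|complex.Im (hinner K x y)| <= hnorm x * hnorm y.
Proof.
rewrite -cReMi -ipZr; apply: le_trans (CS_abs _ _) _.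
by rewrite hn_Zi.
Qed.

Lemma triangle (R : realType) (K : hilbert R) (x y : K) :
  hnorm (x + y) <= hnorm x + hnorm y.
Proof.
rewrite -(ler_pXn2r (n := 2)) ?nnegrE ?addr_ge0 ?hnorm_ge0 //.
rewrite hnorm_sq nsqD -!hnorm_sq.
have := CS x y; lra.
Qed.



Lemma small_zero (R : realType) (u C : R) : 0 <= C ->
  (forall e, 0 < e -> exists d, [/\ 0 <= d, d < e & `|u| <= C * d]) -> u = 0.
Proof.
move=> C0 h; apply/eqP; apply/negPn/negP => u0.
have e0 : 0 < `|u| / (C + 1) by apply: divr_gt0; rewrite ?normr_gt0 //; lra.
have [d [d0 de hu]] := h _ e0.
have hC : `|u| / (C + 1) * (C + 1) = `|u| by rewrite divfK //; apply/negP => /eqP; lra.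
set e := `|u| / (C + 1) in e0 de hC.
have : C * d <= C * e by apply: ler_wpM2l => //; exact: ltW.
move: hC; rewrite mulrDr mulr1 (mulrC e) => hC.
lra.
Qed.

Lemma orth_closure (R : realType) (K : hilbert R) (A : set K) (r x : K) :
  (forall a, A a -> hinner K r a = 0) -> hclosure A x -> hinner K r x = 0.
Proof.
move=> hr hx.
have key : forall e, 0 < e -> exists a, A a /\ hnorm (x - a) < e.
  by move=> e e0; have [a Aa ha] := hx e e0; exists a.
apply: complex_eq0; apply: (@small_zero _ _ (hnorm r) (hnorm_ge0 r)) => e e0;
  have [a [Aa ha]] := key e e0; exists (hnorm (x - a)); split => //;
  try exact: hnorm_ge0.
- have -> : hinner K r x = hinner K r (x - a) by rewrite ipBr (hr a Aa) subr0.
  exact: CS_abs.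
- have -> : hinner K r x = hinner K r (x - a) by rewrite ipBr (hr a Aa) subr0.
  exact: CS_absIm.
Qed.

Lemma orth_closure_l (R : realType) (K : hilbert R) (A : set K) (r x : K) :
  (forall a, A a -> hinner K r a = 0) -> hclosure A x -> hinner K x r = 0.
Proof. by move=> hr hx; rewrite hinnerC (orth_closure hr hx) conjc0. Qed.

Lemma sub_closure (R : realType) (K : hilbert R) (A : set K) (y : K) :
  A y -> hclosure A y.
Proof. by move=> Ay e e0; exists y => //; rewrite subrr hn_0. Qed.

Lemma subsp_add (R : realType) (K : hilbert R) (A : set K) x y :
  is_subspace A -> A x -> A y -> A (x + y).
Proof. by move=> [_ h] Ax Ay; have := h 1 x y Ax Ay; rewrite scale1r. Qed.

Lemma subsp_scale (R : realType) (K : hilbert R) (A : set K) a x :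
  is_subspace A -> A x -> A (a *: x).
Proof. by move=> [h0 h] Ax; have := h a x 0 Ax h0; rewrite addr0. Qed.

Lemma cl_add (R : realType) (K : hilbert R) (A : set K) (x y : K) :
  is_subspace A -> hclosure A x -> A y -> hclosure A (x + y).
Proof.
move=> sA hx Ay e e0; have [a Aa ha] := hx e e0.
exists (a + y); first exact: subsp_add.
by rewrite opprD addrACA subrr addr0.
Qed.

Lemma two_C (R : realType) : (2 : R[i]) = (2 : R)%:C.
Proof. by apply/eqP; rewrite eq_complex /= addr0 !eqxx. Qed.

Lemma quad_zero (R : realType) (u N : R) : 0 <= N ->
  (forall s, 2 * s * u <= s ^+ 2 * N) -> u = 0.
Proof.
move=> N0 h.
have hN : N + 1 != 0 by apply/negP => /eqP; lra.
have ut : u = (u / (N + 1)) * (N + 1) by rewrite divfK.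
move: (h (u / (N + 1))) ut; move: (u / (N + 1)) => t h2 ut.
rewrite ut in h2.
have e : t ^+ 2 * (N + 2) = 2 * t * (t * (N + 1)) - t ^+ 2 * N by ring.
have h3 : t ^+ 2 * (N + 2) <= 0 by rewrite e; lra.
have h4 : 0 <= t ^+ 2 * (N + 2) by apply: mulr_ge0; [exact: sqr_ge0| lra].
have /eqP : t ^+ 2 * (N + 2) = 0 by apply/eqP; rewrite eq_le h3 h4.
rewrite mulf_eq0 expf_eq0 /= => /orP[/eqP t0|/eqP]; last by lra.
by rewrite ut t0 mul0r.
Qed.



Lemma rcM (R : realType) (a b : R) : a%:C * b%:C = (a * b)%:C.
Proof. by apply/eqP; rewrite eq_complex /= !mul0r !mulr0 subr0 addr0 !eqxx. Qed.
Lemma rc1 (R : realType) : (1 : R)%:C = 1. Proof. by []. Qed.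

Lemma sq_lt (R : realType) (a b : R) : 0 <= a -> a < b -> a ^+ 2 < b ^+ 2.
Proof. by move=> a0 ab; rewrite ltr_pXn2r // nnegrE //; lra. Qed.
Lemma sq_le (R : realType) (a b : R) : 0 <= a -> a <= b -> a ^+ 2 <= b ^+ 2.
Proof. by move=> a0 ab; rewrite ler_pXn2r // nnegrE //; lra. Qed.

Lemma parallel (R : realType) (K : hilbert R) (x y : K) :
  nsq (y - x) + nsq (x + y) = 2 * nsq x + 2 * nsq y.
Proof. rewrite !nsqD nsqN ipNr cReN (Re_ipC y x); lra. Qed.

Lemma proj (R : realType) (K : hilbert R) (A : set K) (k : K) : is_subspace A ->
  exists l, hclosure A l /\ (forall a, A a -> hinner K (k - l) a = 0).
Proof.
move=> sA.
pose D := [set r | exists2 a, A a & r = hnorm (k - a)].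
have Dne : D !=set0 by exists (hnorm (k - 0)); exists 0 => //; case: sA.
have Dlb : has_lbound D by exists 0 => r [a _ ->]; exact: hnorm_ge0.
pose d := inf D.
have dlb : forall a, A a -> d <= hnorm (k - a).
  by move=> a Aa; apply: (ge_inf Dlb); exists a.
have d0 : 0 <= d by apply: lb_le_inf => // r [a _ ->]; exact: hnorm_ge0.
have dad : forall e, 0 < e -> exists a, A a /\ hnorm (k - a) < d + e.
  by move=> e e0; have [r [a Aa ->] hr] := inf_adherent e0 (conj Dne Dlb); exists a.
have pos : forall n : nat, 0 < n.+1%:R^-1 :> R by move=> n; rewrite invr_gt0 ltr0n.
have [f hf] := choice (fun n => dad _ (pos n)).
have inv_le : forall m n : nat, (m <= n)%N -> n.+1%:R^-1 <= m.+1%:R^-1 :> R.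
  by move=> m n mn; rewrite lef_pV2 ?posrE ?ltr0n // ler_nat.
have cl_dist : forall b, hclosure A b -> d <= hnorm (k - b).
  move=> b hb; apply/ler_addgt0Pr => e e0; have [a Aa hab] := hb e e0.
  apply: (le_trans (dlb a Aa)).
  have -> : k - a = (k - b) + (b - a) by rewrite addrA subrK.
  apply: le_trans (triangle _ _) _; by rewrite lerD2l ltW.
have cauchy : forall e, 0 < e -> exists N, forall m n, (N <= m)%N -> (N <= n)%N ->
    hnorm (f m - f n) < e.
  move=> e e0.
  have e20 : 0 < e ^+ 2 by exact: exprn_gt0.
  pose eta := e ^+ 2 / (8 * (d + 1) + e ^+ 2).
  have den0 : 0 < 8 * (d + 1) + e ^+ 2 by lra.
  have eta0 : 0 < eta by apply: divr_gt0.
  have etaE : eta * (8 * (d + 1) + e ^+ 2) = e ^+ 2 by rewrite divfK // gt_eqF.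
  have eta1 : eta <= 1.
    rewrite -(@ler_pM2r _ (8 * (d + 1) + e ^+ 2)) // etaE mul1r; lra.
  have [N hN] := ltr_add_invr eta0; rewrite add0r in hN.
  exists N => m n hm hn.
  have [Am hm'] := hf m; have [An hn'] := hf n.
  have hm2 : hnorm (k - f m) < d + eta.
    by apply: (lt_le_trans hm'); rewrite lerD2l; apply: le_trans (inv_le _ _ hm) (ltW hN).
  have hn2 : hnorm (k - f n) < d + eta.
    by apply: (lt_le_trans hn'); rewrite lerD2l; apply: le_trans (inv_le _ _ hn) (ltW hN).
  have Xm := sq_lt (hnorm_ge0 _) hm2; have Xn := sq_lt (hnorm_ge0 _) hn2.
  rewrite !hnorm_sq in Xm Xn.
  pose mid := (2^-1 : R)%:C *: (f m + f n).
  have Amid : A mid by apply: subsp_scale => //; exact: subsp_add.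
  have Z := sq_le d0 (dlb _ Amid); rewrite hnorm_sq in Z.
  have vecE : (k - f m) + (k - f n) = (2 : R)%:C *: (k - mid).
    rewrite /mid scalerBr scalerA rcM mulfV ?pnatr_eq0 // rc1 scale1r.
    rewrite -two_C scaler_nat mulr2n opprD addrACA; by [].
  have P := parallel (k - f m) (k - f n).
  rewrite vecE nsqZr in P.
  have -> : f m - f n = (k - f n) - (k - f m) by rewrite opprB [RHS]addrC addrA subrK.
  have eta2 : eta ^+ 2 <= eta by rewrite expr2 ler_piMr // ltW.
  have E1 : (d + eta) ^+ 2 = d ^+ 2 + 2 * d * eta + eta ^+ 2 by ring.
  have E2 : eta * (8 * (d + 1) + e ^+ 2) = 8 * (d * eta) + 8 * eta + eta * e ^+ 2 by ring.
  have E3 : 2 * d * eta = 2 * (d * eta) by ring.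
  have eta3 : 0 <= eta * e ^+ 2 by apply: mulr_ge0; lra.
  have Hs : nsq ((k - f n) - (k - f m)) < e ^+ 2.
    move: P Xm Xn Z; rewrite E1 E3 -etaE E2 expr2 -!expr2; lra.
  rewrite -(ltr_pXn2r (n := 2)) ?nnegrE ?hnorm_ge0 ?ltW // hnorm_sq; exact: Hs.
have [l hl] := hcomplete cauchy.
have hcl : hclosure A l.
  move=> e e0; have [N hN] := hl e e0; exists (f N); first by case: (hf N).
  by rewrite hn_sym; exact: hN.
have hkl : hnorm (k - l) <= d.
  apply/ler_addgt0Pr => e e0.
  have e2 : 0 < e / 2 by lra.
  have [N1 hN1] := hl _ e2.
  have [N2 hN2] := ltr_add_invr e2; rewrite add0r in hN2.
  pose n := maxn N1 N2.
  have -> : k - l = (k - f n) + (f n - l) by rewrite addrA subrK.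
  apply: le_trans (triangle _ _) _.
  have h1 : hnorm (f n - l) < e / 2 by apply: hN1; exact: leq_maxl.
  have h2 : hnorm (k - f n) < d + e / 2.
    have [_ h] := hf n; apply: (lt_le_trans h); rewrite lerD2l.
    by apply: le_trans (inv_le _ _ (leq_maxr N1 N2)) (ltW hN2).
  lra.
exists l; split => // a Aa.
have key : forall b, A b -> forall s : R,
    2 * s * complex.Re (hinner K (k - l) b) <= s ^+ 2 * nsq b.
  move=> b Ab s.
  have hb : hclosure A (l + s%:C *: b) by apply: cl_add => //; exact: subsp_scale.
  have := cl_dist _ hb.
  have -> : k - (l + s%:C *: b) = (k - l) - s%:C *: b by rewrite opprD addrA.
  move=> h; have := le_trans hkl h => h'.
  have := sq_le (hnorm_ge0 _) h'; rewrite !hnorm_sq nsq_expand; lra.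
apply: complex_eq0.
  exact: (quad_zero (nsq_ge0 a) (key a Aa)).
rewrite -cReMi -ipZr.
apply: (quad_zero (nsq_ge0 _) (key _ _)); exact: subsp_scale.
Qed.



Lemma double_orth (R : realType) (K : hilbert R) (A : set K) (x : K) :
  is_subspace A ->
  (forall y, (forall a, A a -> hinner K y a = 0) -> hinner K x y = 0) ->
  hclosure A x.
Proof.
move=> sA hx; have [l [hl hr]] := proj x sA.
have h1 : hinner K x (x - l) = 0 by apply: hx.
have h2 : hinner K l (x - l) = 0 by exact: orth_closure_l hr hl.
have : x - l = 0 by apply: hinner_eq0; rewrite ipBl h1 h2 subrr.
by move/eqP; rewrite subr_eq0 => /eqP ->.
Qed.

Lemma pip (R : realType) (K K' : hilbert R) (V : {linear K -> K'}) (A : set K) (x a : K) :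
  is_subspace A ->
  (forall z, hclosure A z -> hnorm (V z) = hnorm z) ->
  hclosure A x -> A a -> hinner K' (V x) (V a) = hinner K x a.
Proof.
move=> sA iso hx Aa.
have iso2 : forall z, hclosure A z -> nsq (V z) = nsq z.
  by move=> z hz; rewrite -!hnorm_sq iso.
have Ha := iso2 _ (sub_closure Aa); have Hx := iso2 _ hx.
have Hxa := iso2 _ (cl_add sA hx Aa).
have Hxia := iso2 _ (cl_add sA hx (subsp_scale 'i sA Aa)).
apply: complex_eqRI.
  move: Hxa; rewrite linearD !nsqD Ha Hx; lra.
move: Hxia; rewrite linearD linearZ !nsqD !nsqZi Ha Hx !ipZr !cReMi; lra.
Qed.



Lemma S_add (R : realType) (H : hilbert R) (S : linrel H H) f g f' g' :
  is_linrel S -> S (f, g) -> S (f', g') -> S (f + f', g + g').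
Proof. by move=> [_ h] h1 h2; have := h 1 _ _ _ _ h1 h2; rewrite !scale1r. Qed.

Lemma S_sub (R : realType) (H : hilbert R) (S : linrel H H) f g f' g' :
  is_linrel S -> S (f, g) -> S (f', g') -> S (f - f', g - g').
Proof.
by move=> [_ h] h1 h2; have := h (-1) _ _ _ _ h2 h1; rewrite !scaleN1r (addrC (- f')) (addrC (- g')).
Qed.

Lemma dom0 (R : realType) (H : hilbert R) (S : linrel H H) :
  is_linrel S -> rdom S 0.
Proof. by move=> [h _]; exists 0. Qed.

Lemma dom_sub (R : realType) (H : hilbert R) (S : linrel H H) x y :
  is_linrel S -> rdom S x -> rdom S y -> rdom S (x - y).
Proof. by move=> lS [x' hx] [y' hy]; exists (x' - y'); exact: S_sub. Qed.

Lemma dom_lin (R : realType) (H : hilbert R) (S : linrel H H) a x y :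
  is_linrel S -> rdom S x -> rdom S y -> rdom S (a *: x + y).
Proof. by move=> [_ h] [x' hx] [y' hy]; exists (a *: x' + y'); exact: h. Qed.

Lemma Q0 (R : realType) (H K : hilbert R) (S : linrel H H) c (Q : H -> K) :
  is_linrel S -> representing_map S c Q -> Q 0 = 0.
Proof.
move=> lS [lin _]; have := lin 1 0 0 (dom0 lS) (dom0 lS).
rewrite scale1r addr0 scale1r.
by move/(congr1 (fun t => t - Q 0)); rewrite subrr addrK.
Qed.

Lemma QB (R : realType) (H K : hilbert R) (S : linrel H H) c (Q : H -> K) x y :
  is_linrel S -> representing_map S c Q -> rdom S x -> rdom S y ->
  Q (x - y) = Q x - Q y.
Proof.
move=> lS [lin _] hx hy; have := lin (-1) y x hy hx.
by rewrite !scaleN1r addrC [- Q y + _]addrC.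
Qed.

Lemma ipQQ (R : realType) (H K : hilbert R) (S : linrel H H) c (Q : H -> K) x x' :
  representing_map S c Q -> S (x, x') ->
  hinner K (Q x) (Q x) = hinner H x' x - c%:C * hinner H x x.
Proof.
move=> [_ rep] hx; rewrite (rep x x' x hx); last by exists x'.
by rewrite addrAC subrr add0r.
Qed.

Lemma Q_eq0 (R : realType) (H K K' : hilbert R) (S : linrel H H) c (Q : H -> K)
  (Q' : H -> K') x : representing_map S c Q -> representing_map S c Q' ->
  rdom S x -> Q x = 0 -> Q' x = 0.
Proof.
move=> rQ rQ' [x' hx] h0; apply: hinner_eq0.
by rewrite (ipQQ rQ' hx) -(ipQQ rQ hx) h0 ip0l.
Qed.

Lemma Q_eq (R : realType) (H K K' : hilbert R) (S : linrel H H) c (Q : H -> K)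
  (Q' : H -> K') x y : is_linrel S -> representing_map S c Q -> representing_map S c Q' ->
  rdom S x -> rdom S y -> Q x = Q y -> Q' x = Q' y.
Proof.
move=> lS rQ rQ' hx hy e.
have : Q' (x - y) = 0.
  apply: (Q_eq0 rQ rQ'); first exact: dom_sub.
  by rewrite (QB lS rQ hx hy) e subrr.
by rewrite (QB lS rQ' hx hy) => /eqP; rewrite subr_eq0 => /eqP.
Qed.

Lemma ranQ_sub (R : realType) (H K : hilbert R) (S : linrel H H) c (Q : H -> K) :
  is_linrel S -> representing_map S c Q -> is_subspace (rran (rop S Q)).
Proof.
move=> lS rQ; split.
  by exists 0; split; [exact: dom0| rewrite (Q0 lS rQ)].
move=> a u v [x [hx /= ->]] [y [hy /= ->]]; exists (a *: x + y); split => /=.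
  exact: dom_lin.
by case: rQ => lin _; rewrite lin.
Qed.



Lemma vec_id (V : zmodType) (f' p' a b : V) : f' + (p' - f' - (a - b)) = p' - a + b.
Proof. by rewrite opprB addrA (addrC f') subrK addrCA addrC. Qed.

Lemma part1 (R : realType) (H Kc Kc' : hilbert R) (S : linrel H H) c
  (Q : H -> Kc) (Q' : H -> Kc') (V : {linear Kc -> Kc'}) :
  is_linrel S -> representing_map S c Q -> representing_map S c Q' ->
  (forall phi, rdom S phi -> Q' phi = V (Q phi)) ->
  rcomp (companion S c Q') (opgraph (rran (rop S Q)) V) = companion S c Q.
Proof.
move=> lS rQ rQ' hV; apply/seteqP; split => -[f h] /=.
- move=> [g [[[x [hx ex]] eg] [phi [phi' [Sp [e1 e2]]]]]]; simpl in *.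
  exists phi, phi'; split => //; split => //.
  have dphi : rdom S phi by exists phi'.
  rewrite ex; apply: (Q_eq lS rQ' rQ hx dphi).
  by rewrite hV // -ex -eg.
- move=> [phi [phi' [Sp [e1 e2]]]]; simpl in *.
  have dphi : rdom S phi by exists phi'.
  exists (V f); split; first by split => //; exists phi.
  by exists phi, phi'; split => //; split => //; rewrite e1 hV.
Qed.

Lemma part2 (R : realType) (H K : hilbert R) (S : linrel H H) c (Q : H -> K) :
  S `<=` raddc c (rcomp (companion S c Q) (rop S Q)).
Proof.
move=> [phi phi'] Sp /=; exists (phi' - c%:C *: phi); split; last by rewrite subrK.
exists (Q phi); split; first by split => //=; exists phi'.
by exists phi, phi'.
Qed.

Lemma comp_sub (R : realType) (H K K' : hilbert R) (S : linrel H H) c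
  (Q : H -> K) (Q' : H -> K') :
  is_linrel S -> representing_map S c Q -> representing_map S c Q' ->
  rcomp (companion S c Q) (rop S Q) `<=` rcomp (companion S c Q') (rop S Q').
Proof.
move=> lS rQ rQ' [f h] [g [[hf eg] [phi [phi' [Sp [e1 e2]]]]]]; simpl in *.
exists (Q' f); split; first by split.
exists phi, phi'; split => //; split => //.
apply: (Q_eq lS rQ rQ' hf); first by exists phi'.
by rewrite -eg.
Qed.

Lemma ker1 (R : realType) (H K : hilbert R) (S : linrel H H) c (Q : H -> K) x x' :
  representing_map S c Q -> S (x, x') ->
  (forall f g, S (f, g) -> hinner H (x' - c%:C *: x) f = 0) -> Q x = 0.
Proof.
move=> rQ Sx h; apply: hinner_eq0; rewrite (ipQQ rQ Sx).
by have := h _ _ Sx; rewrite ipBl ipZl.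
Qed.

Lemma ker2 (R : realType) (H K : hilbert R) (S : linrel H H) c (Q : H -> K) x x' :
  representing_map S c Q -> S (x, x') -> Q x = 0 ->
  (forall f g, S (f, g) -> hinner H (x' - c%:C *: x) f = 0).
Proof.
move=> [_ rep] Sx Qx f g Sf; rewrite ipBl ipZl (rep x x' f Sx); last by exists g.
by rewrite Qx ip0l addr0 subrr.
Qed.

Lemma mulS_orth (R : realType) (H K : hilbert R) (S : linrel H H) c (Q : H -> K) k :
  is_linrel S -> representing_map S c Q -> S (0, k) ->
  forall f g, S (f, g) -> hinner H k f = 0.
Proof.
move=> lS rQ Sk f g Sf; case: (rQ) => _ rep.
rewrite (rep 0 k f Sk); last by exists g.
by rewrite (Q0 lS rQ) !ip0l mulr0 addr0.
Qed.

Lemma part4 (R : realType) (H K : hilbert R) (S : linrel H H) c (Q : H -> K) :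
  is_linrel S -> representing_map S c Q ->
  (S = raddc c (rcomp (companion S c Q) (rop S Q)) <->
         rran (rsubc S c) `&` rmul (radj S) = rmul S).
Proof.
move=> lS rQ; split.
- move=> hST; apply/seteqP; split.
  + move=> k [[f [g [Sfg ek]]] hk]; simpl in *.
    have Qf0 : Q f = 0.
      apply: (ker1 rQ Sfg) => f0 g0 h0; rewrite -ek.
      by rewrite (hk _ _ h0) ip0l.
    rewrite /rmul hST /=; exists k; split; last by rewrite scaler0 addr0.
    exists (Q 0); split; first by split => //=; exact: dom0.
    by exists f, g; split => //; split => //=; rewrite (Q0 lS rQ) Qf0.
  + move=> k hk; split.
      by exists 0, k; split => //=; rewrite scaler0 subr0.
    move=> f0 g0 h0 /=; rewrite ip0l; exact: (mulS_orth lS rQ hk h0).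
- move=> E; apply/seteqP; split; first exact: part2.
  move=> [f h] [g0 [[q [[hf eq] [phi [phi' [Sp [e1 e2]]]]]] eh]]; simpl in *.
  have dphi : rdom S phi by exists phi'.
  case: (hf) => f' Sf.
  have Sx := S_sub lS Sp Sf.
  have Qx : Q (phi - f) = 0 by rewrite (QB lS rQ dphi hf) -e1 eq subrr.
  have hk : rmul S (phi' - f' - c%:C *: (phi - f)).
    rewrite -E; split; first by exists (phi - f), (phi' - f').
    by move=> f1 g1 h1 /=; rewrite ip0l; exact: (ker2 rQ Sx Qx h1).
  have := S_add lS Sf hk; rewrite addr0 eh e2 scalerBr vec_id; by [].
Qed.



Lemma adjJ (R : realType) (H K : hilbert R) (S : linrel H H) c (Q : H -> K) f g :
  radj (companion S c Q) (f, g) <->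
  (forall phi phi', S (phi, phi') -> hinner K g (Q phi) = hinner H f (phi' - c%:C *: phi)).
Proof.
split.
  by move=> h phi phi' Sp; apply: (h (Q phi) (phi' - c%:C *: phi)); exists phi, phi'.
by move=> h f0 g0 [phi [phi' [Sp [/= -> /= ->]]]]; exact: h.
Qed.

Lemma mulJ (R : realType) (H K : hilbert R) (S : linrel H H) c (Q : H -> K) y :
  rmul (radj (companion S c Q)) y <->
  (forall a, rran (rop S Q) a -> hinner K y a = 0).
Proof.
split.
  move=> h a [x [[x' Sx] /= ->]].
  by have := h (Q x) (x' - c%:C *: x); rewrite ip0l; apply; exists x, x'.
move=> h f0 g0 [phi [phi' [Sp [/= -> _]]]]; rewrite ip0l; apply: h.
by exists phi; split => //; exists phi'.
Qed.

Lemma part5 (R : realType) (H Kc Kc' : hilbert R) (S : linrel H H) c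
  (Q : H -> Kc) (Q' : H -> Kc') (V : {linear Kc -> Kc'}) :
  is_linrel S -> representing_map S c Q -> representing_map S c Q' ->
  partial_isometry V (hclosure (rran (rop S Q))) (hclosure (rran (rop S Q'))) ->
  (forall phi, rdom S phi -> Q' phi = V (Q phi)) ->
  rreg (radj (companion S c Q')) = rcomp (opgraph setT V) (rreg (radj (companion S c Q))).
Proof.
move=> lS rQ rQ' [iso [van rng]] hV.
have sA := ranQ_sub lS rQ; have sA' := ranQ_sub lS rQ'.
have AQ : forall phi phi', S (phi, phi') -> rran (rop S Q) (Q phi).
  by move=> phi phi' Sp; exists phi; split => //; exists phi'.
have AQ' : forall phi phi', S (phi, phi') -> rran (rop S Q') (Q' phi).
  by move=> phi phi' Sp; exists phi; split => //; exists phi'.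
apply/seteqP; split => -[f h] /=.
- move=> [g' [adj' [mul' orth']]]; simpl in *.
  have hcl : hclosure (rran (rop S Q')) h.
    apply: double_orth => // y hy; apply: orth'; exact/mulJ.
  rewrite -rng in hcl; case: hcl => k _ ek.
  have [l [hl hr]] := proj k sA.
  have Vkl : V (k - l) = 0.
    by apply: van => a ha; exact: orth_closure hr ha.
  have Vl : V l = h by move: Vkl; rewrite linearB ek => /eqP; rewrite subr_eq0 => /eqP <-.
  exists l; split; last by [].
  exists l; split; last split.
  + apply/adjJ => phi phi' Sp.
    have dphi : rdom S phi by exists phi'.
    rewrite -(pip sA iso hl (AQ _ _ Sp)) Vl -hV //.
    move/mulJ: mul' => m; have := m _ (AQ' _ _ Sp).
    rewrite ipBl => /eqP; rewrite subr_eq0 => /eqP <-.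
    by move/adjJ: adj'; apply.
  + by apply/mulJ => a _; rewrite subrr ip0l.
  + by move=> y /mulJ hy; exact: orth_closure_l hy hl.
- move=> [g [[g0 [adj [mul orth]]] [_ /= ->]]]; simpl in *.
  have hg : hclosure (rran (rop S Q)) g.
    apply: double_orth => // y hy; apply: orth; exact/mulJ.
  exists (V g); split; last split.
  + apply/adjJ => phi phi' Sp.
    have dphi : rdom S phi by exists phi'.
    rewrite hV // (pip sA iso hg (AQ _ _ Sp)).
    move/mulJ: mul => m; have := m _ (AQ _ _ Sp).
    rewrite ipBl => /eqP; rewrite subr_eq0 => /eqP <-.
    by move/adjJ: adj; apply.
  + by apply/mulJ => a _; rewrite subrr ip0l.
  + move=> y /mulJ hy; apply: orth_closure_l hy _.
    by rewrite -rng; exists g.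
Qed.

Unset Implicit Arguments.
Local Close Scope complex_scope.

Theorem lemma3p2 (R : realType) (H Kc Kc' : hilbert R) (S : linrel H H)
  (gamma c : R) (Q : H -> Kc) (Q' : H -> Kc') (V : {linear Kc -> Kc'}) :
  is_linrel S ->
  semibounded_lb S gamma ->
  c <= gamma ->
  representing_map S c Q ->
  representing_map S c Q' ->
  partial_isometry V (hclosure (rran (rop S Q))) (hclosure (rran (rop S Q'))) ->
  (forall phi, rdom S phi -> Q' phi = V (Q phi)) ->
  let Jc := companion S c Q in
  let Jc' := companion S c Q' in
  [/\ rcomp Jc' (opgraph (rran (rop S Q)) V) = Jc,
      S `<=` raddc c (rcomp Jc' (rop S Q')),
      raddc c (rcomp Jc' (rop S Q')) = raddc c (rcomp Jc (rop S Q)),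
      (S = raddc c (rcomp Jc (rop S Q)) <->
         rran (rsubc S c) `&` rmul (radj S) = rmul S) &
      rreg (radj Jc') = rcomp (opgraph setT V) (rreg (radj Jc))].
Proof.
move=> lS _ _ rQ rQ' piV hV Jc Jc'.
split.
- exact: part1.
- exact: part2.
- have E : rcomp Jc' (rop S Q') = rcomp Jc (rop S Q).
    by apply/seteqP; split; apply: comp_sub.
  by rewrite E.
- exact: part4.
- exact: part5.
Qed.
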